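(* For any probability measures $\mu,\mu_1,\mu_2$ on $\mathbb{R}^n,\mathbb{R}^{n_1},\mathbb{R}^{n_2}$ satisfying $\mathrm{IC}(\beta)$, $\mathrm{IC}(\beta_1)$, $\mathrm{IC}(\beta_2)$ respectively: 1. If $L$ is an affine map, then $L_{\#}\mu$ satisfies $\mathrm{IC}(\beta)$. 2. The product $\mu_1\otimes\mu_2$ satisfies $\mathrm{IC}(\beta_1\vee\beta_2)$. 3. If $n_1=n_2$, then the convolution $\mu_1*\mu_2$ satisfies $\mathrm{IC}(\beta_1\vee\beta_2)$. 4. The symmetrization $\overline{\mu}$ satisfies $\mathrm{IC}(\beta)$.
   Context: $T_{\#}\mu(A)=\mu(T^{-1}(A))$ is the push-forward; $x\vee y=\max\{x,y\}$. A pair $(\mu,W)$, with $\mu$ a probability measure on $\mathbb{R}^n$ and $W:\mathbb{R}^n\to[0,\infty]$, satisfies property $(\tau)$ if for every bounded function $f$, $\int e^{h}\,d\mu\int e^{-f}\,d\mu\le 1$, where $h(x)=\inf_{y}\{W(x-y)+f(y)\}$ is the infimum convolution of $W$ and $f$. For a measure $\mu$, $\mu'$ is its reflection through the origin, $\overline{\mu}=\mu*\mu'$, $\Lambda_\mu=\ln\int e^{\langle \cdot,y\rangle}d\mu(y)$, and $\Lambda^*_\mu(x)=\sup_y\{\langle x,y\rangle-\Lambda_\mu(y)\}$. A probability measure $\mu$ satisfies $\mathrm{IC}(\beta)$ ($\beta>0$) if the pair $(\mu,\Lambda^*_{\overline{\mu}}(\cdot/\beta))$ satisfies property $(\tau)$.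 *)

(* Defs.v *)
From HB Require Import structures.
From mathcomp Require Import all_boot all_order all_algebra.
From mathcomp Require Import all_classical all_reals all_analysis.
Set Implicit Arguments. Unset Strict Implicit. Unset Printing Implicit Defensive.
Import Order.TTheory GRing.Theory Num.Theory.
Import numFieldNormedType.Exports.
Local Open Scope classical_set_scope.
Local Open Scope ring_scope.

(* R^n is represented by row vectors 'rV[R]_n, equipped with the Borel
   sigma-algebra = the sigma-algebra generated by the coordinate maps. *)
Definition rV_display : measure_display -> measure_display.
Proof. exact. Qed.

Section measurable_rV.
Context (R : realType) (n : nat).

Let coor : 'I_n -> 'rV[R]_n -> R := fun i x => x ord0 i.

Let rV_set0 : g_sigma_preimage coor set0.
Proof. exact: sigma_algebra0. Qed.

Let rV_setC A : g_sigma_preimage coor A -> g_sigma_preimage coor (~` A).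
Proof. exact: sigma_algebraC. Qed.

Let rV_bigcup (F : _^nat) : (forall i, g_sigma_preimage coor (F i)) ->
  g_sigma_preimage coor (\bigcup_i (F i)).
Proof. exact: sigma_algebra_bigcup. Qed.

HB.instance Definition _ := @isMeasurable.Build (rV_display default_measure_display)
  'rV[R]_n (g_sigma_preimage coor) rV_set0 rV_setC rV_bigcup.

End measurable_rV.

Section IC_defs.
Context (R : realType).
Local Open Scope ereal_scope.

Definition dotp n (x y : 'rV[R]_n) : R := (\sum_(i < n) x ord0 i * y ord0 i)%R.

Definition reflect_meas n (mu : set 'rV[R]_n -> \bar R) : set 'rV[R]_n -> \bar R :=
  pushforward mu (fun x => - x)%R.

Definition conv_meas n (mu1 mu2 : set 'rV[R]_n -> \bar R) : set 'rV[R]_n -> \bar R :=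
  pushforward (mu1 \x mu2) (fun p : 'rV[R]_n * 'rV[R]_n => p.1 + p.2)%R.

Definition symm_meas n (mu : set 'rV[R]_n -> \bar R) : set 'rV[R]_n -> \bar R :=
  conv_meas mu (reflect_meas mu).

Definition prod_meas n1 n2 (mu1 : set 'rV[R]_n1 -> \bar R)
  (mu2 : set 'rV[R]_n2 -> \bar R) : set 'rV[R]_(n1 + n2) -> \bar R :=
  pushforward (mu1 \x mu2) (fun p : 'rV[R]_n1 * 'rV[R]_n2 => row_mx p.1 p.2).

Definition Lambda n (mu : set 'rV[R]_n -> \bar R) (y : 'rV[R]_n) : \bar R :=
  match \int[mu]_x (expR (dotp x y))%:E with
  | r%:E => (ln r)%:E
  | +oo => +oo
  | -oo => -oo
  end.

Definition legendre n (L : 'rV[R]_n -> \bar R) (x : 'rV[R]_n) : \bar R :=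
  ereal_sup [set (dotp x y)%:E - L y | y in [set: 'rV[R]_n]].

Definition inf_conv n (W : 'rV[R]_n -> \bar R) (f : 'rV[R]_n -> R) (x : 'rV[R]_n)
  : \bar R :=
  ereal_inf [set W (x - y)%R + (f y)%:E | y in [set: 'rV[R]_n]].

Definition property_tau n (mu : set 'rV[R]_n -> \bar R) (W : 'rV[R]_n -> \bar R)
  : Prop :=
  forall f : 'rV[R]_n -> R,
    measurable_fun [set: 'rV[R]_n] f ->
    (exists M : R, forall x, (`|f x| <= M)%R) ->
    (\int[mu]_x expeR (inf_conv W f x)) * (\int[mu]_x (expR (- f x))%:E) <= 1.

Definition IC n (beta : R) (mu : set 'rV[R]_n -> \bar R) : Prop :=
  property_tau mu (fun x => legendre (Lambda (symm_meas mu)) (beta^-1 *: x)%R).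

Definition affine_map n m (L : 'rV[R]_n -> 'rV[R]_m) : Prop :=
  exists (A : 'M[R]_(n, m)) (b : 'rV[R]_m), forall x, L x = (x *m A + b)%R.

End IC_defs.

(* Main.v *)
Require Import Defs.
From HB Require Import structures.
From mathcomp Require Import all_boot all_order all_algebra.
From mathcomp Require Import all_classical all_reals all_analysis.
From mathcomp Require Import measurable_realfun.
From mathcomp Require Import ring lra.
Set Implicit Arguments. Unset Strict Implicit. Unset Printing Implicit Defensive.
Import Order.TTheory GRing.Theory Num.Theory.
Import numFieldNormedType.Exports.
Local Open Scope classical_set_scope.
Local Open Scope ring_scope.


Section meas.
Context (R : realType).

Lemma mcoor n (i : 'I_n) : measurable_fun [set: 'rV[R]_n] (fun x => x ord0 i).
Proof.
move=> _ Y mY; rewrite setTI; apply: sub_sigma_algebra => /=.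
rewrite -bigcup_seq/=; exists i => /=; first by rewrite mem_index_enum.
by exists Y => //; rewrite setTI.
Qed.

Lemma mrVP d (T1 : measurableType d) n (f : T1 -> 'rV[R]_n) :
  (forall i, measurable_fun [set: T1] (fun x => f x ord0 i)) ->
  measurable_fun [set: T1] f.
Proof.
move=> mf _ A mA; rewrite setTI.
have : A \in (g_sigma_preimage (fun (i : 'I_n) (x : 'rV[R]_n) => x ord0 i)) by rewrite inE.
rewrite inE => {mA}; move: A.
apply: smallest_sub.
  split.
  - by rewrite preimage_set0; exact: measurable0.
  - by move=> A mA; rewrite setTD -preimage_setC; exact: measurableC.
  - by move=> F mF; rewrite preimage_bigcup; exact: bigcupT_measurable.
case: n => [|n] in f mf *; first by rewrite big_ord0.
rewrite -bigcup_mkord_ord; apply: bigcup_sub => i Ii.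
move=> A [B mB <-]; rewrite setTI -comp_preimage.
have iE : Ordinal Ii = inord i by apply/val_inj => /=; rewrite inordK.
have := mf (Ordinal Ii) measurableT B mB; rewrite setTI -iE; exact.
Qed.

Lemma mdotp n (y : 'rV[R]_n) : measurable_fun [set: 'rV[R]_n] (fun x => dotp x y).
Proof.
rewrite /dotp; apply: measurable_sum => i.
by apply: measurable_funM => //; exact: mcoor.
Qed.

Lemma mdotp_comp d (T1 : measurableType d) n (f : T1 -> 'rV[R]_n) y :
  measurable_fun [set: T1] f -> measurable_fun [set: T1] (fun x => dotp (f x) y).
Proof. move=> mf; exact: (measurableT_comp (mdotp y) mf). Qed.

Lemma maffine n m (A : 'M[R]_(n, m)) (b : 'rV[R]_m) :
  measurable_fun [set: 'rV[R]_n] (fun x => x *m A + b).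
Proof.
apply: mrVP => j; under eq_fun do rewrite !mxE.
apply: measurable_funD => //; apply: measurable_sum => i.
by apply: measurable_funM => //; exact: mcoor.
Qed.

Lemma mrowmx n1 n2 :
  measurable_fun [set: 'rV[R]_n1 * 'rV[R]_n2] (fun p => row_mx p.1 p.2).
Proof.
apply: mrVP => j; case: (splitP j) => k jk.
  have -> : j = lshift n2 k by apply: val_inj.
  under eq_fun do rewrite row_mxEl.
  exact: (measurableT_comp (mcoor k) measurable_fst).
have -> : j = rshift n1 k by apply: val_inj.
under eq_fun do rewrite row_mxEr.
exact: (measurableT_comp (mcoor k) measurable_snd).
Qed.

Lemma mrowmx1 n1 n2 (z : 'rV[R]_n1) :
  measurable_fun [set: 'rV[R]_n2] (fun y => row_mx z y).
Proof.
apply: mrVP => j; case: (splitP j) => k jk.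
  have -> : j = lshift n2 k by apply: val_inj.
  under eq_fun do rewrite row_mxEl; exact: measurable_cst.
have -> : j = rshift n1 k by apply: val_inj.
under eq_fun do rewrite row_mxEr; exact: mcoor.
Qed.

Lemma madd n :
  measurable_fun [set: 'rV[R]_n * 'rV[R]_n] (fun p => p.1 + p.2).
Proof.
apply: mrVP => j; under eq_fun do rewrite !mxE.
apply: measurable_funD.
  exact: (measurableT_comp (mcoor j) measurable_fst).
exact: (measurableT_comp (mcoor j) measurable_snd).
Qed.

Lemma mneg n : measurable_fun [set: 'rV[R]_n] (fun x => - x).
Proof.
apply: mrVP => j; under eq_fun do rewrite !mxE.
exact: (measurableT_comp _ (mcoor j)).
Qed.

End meas.

Section pfP.
Local Open Scope ereal_scope.
Context d1 d2 (X : measurableType d1) (Y : measurableType d2) (R : realType).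
Context (mu : probability X R) (f : X -> Y).

Definition pf (mf : measurable_fun setT f) : set Y -> \bar R := pushforward mu f.

Variable (mf : measurable_fun setT f).

Let pf0 : pf mf set0 = 0.
Proof. by rewrite /pf /pushforward preimage_set0 measure0. Qed.

Let pf_ge0 A : 0 <= pf mf A.
Proof. by apply: measure_ge0. Qed.

Let pf_sigma_additive : semi_sigma_additive (pf mf).
Proof.
move=> F mF tF mUF; rewrite /pf /pushforward preimage_bigcup.
apply: measure_semi_sigma_additive.
- by move=> n; rewrite -[X in measurable X]setTI; exact: mf.
- apply/trivIsetP => /= i j _ _ ij; rewrite -preimage_setI.
  by move/trivIsetP : tF => /(_ _ _ _ _ ij) ->//; rewrite preimage_set0.
- by rewrite -preimage_bigcup -[X in measurable X]setTI; exact: mf.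
Qed.

HB.instance Definition _ := isMeasure.Build _ _ _
  (pf mf) pf0 pf_ge0 pf_sigma_additive.

Let pf_setT : pf mf setT = 1.
Proof. by rewrite /pf /pushforward preimage_setT probability_setT. Qed.

HB.instance Definition _ := Measure_isProbability.Build _ _ _ (pf mf) pf_setT.

End pfP.


Section B.
Local Open Scope ereal_scope.
Context (R : realType).
Import HBNNSimple.

Lemma le_int_nn d (T : measurableType d) (mu : {measure set T -> \bar R})
  (f g : T -> \bar R) :
  (forall x, 0 <= f x) -> (forall x, f x <= g x) ->
  \int[mu]_x f x <= \int[mu]_x g x.
Proof.
move=> f0 fg; have g0 x : 0 <= g x := le_trans (f0 x) (fg x).
rewrite !ge0_integralTE//; apply: le_ereal_sup => _ [h hf <-].
by exists h => //= x; exact: le_trans (hf x) (fg x).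
Qed.

Lemma le_int_pf d1 d2 (X : measurableType d1) (Y : measurableType d2)
  (mu : probability X R) (phi : X -> Y) (mphi : measurable_fun setT phi)
  (F : Y -> \bar R) : (forall y, 0 <= F y) ->
  \int[pf mu mphi]_y F y <= \int[mu]_x F (phi x).
Proof.
move=> F0; rewrite [X in X <= _]ge0_integralTE//.
apply: ge_ereal_sup => _ [h hF <-].
rewrite -integralT_nnsfun /pf.
rewrite ge0_integral_pushforward//; last first.
  by move=> y _; rewrite lee_fin.
  exact/measurable_EFinP.
rewrite preimage_setT; apply: le_int_nn => x /=; first by rewrite lee_fin.
exact: hF.
Qed.


Lemma le_int_fub d1 d2 (T1 : measurableType d1) (T2 : measurableType d2)
  (m1 : probability T1 R) (m2 : probability T2 R)
  (G : T1 * T2 -> \bar R) (K : T1 -> \bar R) :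
  (forall z, 0 <= G z) -> (forall x, \int[m2]_y G (x, y) <= K x) ->
  \int[m1 \x m2]_z G z <= \int[m1]_x K x.
Proof.
move=> G0 GK; rewrite [X in X <= _]ge0_integralTE//.
apply: ge_ereal_sup => _ [h hG <-].
rewrite -integralT_nnsfun.
rewrite (fubini_tonelli1 (EFin \o h)); last 2 first.
  exact/measurable_EFinP.
  by move=> z /=; rewrite lee_fin.
apply: le_int_nn => x.
  by apply: integral_ge0 => y _ /=; rewrite lee_fin.
apply: le_trans (GK x); apply: le_int_nn => y /=; first by rewrite lee_fin.
exact: hG.
Qed.

Lemma int_sep d1 d2 (T1 : measurableType d1) (T2 : measurableType d2)
  (m1 : probability T1 R) (m2 : probability T2 R) (g : T1 -> R) (h : T2 -> R) :
  (forall x, (0 <= g x)%R) -> (forall y, (0 <= h y)%R) ->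
  measurable_fun setT g -> measurable_fun setT h ->
  \int[m1 \x m2]_z (g z.1 * h z.2)%:E =
  \int[m1]_x (g x)%:E * \int[m2]_y (h y)%:E.
Proof.
move=> g0 h0 mg mh.
rewrite (fubini_tonelli1 (fun z => (g z.1 * h z.2)%:E)); last 2 first.
  apply/measurable_EFinP; apply: measurable_funM.
    exact: (measurableT_comp mg measurable_fst).
  exact: (measurableT_comp mh measurable_snd).
  by move=> z /=; rewrite lee_fin mulr_ge0.
rewrite /fubini_F.
under eq_integral => x _.
  under eq_integral do rewrite /= EFinM.
  rewrite ge0_integralZl_EFin//; last 2 first.
    by move=> y _; rewrite lee_fin.
    exact/measurable_EFinP.
  over.
rewrite ge0_integralZr//.
- exact/measurable_EFinP.
- by move=> x _; rewrite lee_fin.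
- by apply: integral_ge0 => y _; rewrite lee_fin.
Qed.

End B.


Section dotp.
Context (R : realType).

Lemma dotpDl n (x x' y : 'rV[R]_n) : dotp (x + x') y = dotp x y + dotp x' y.
Proof. by rewrite /dotp -big_split; apply: eq_bigr => i _; rewrite mxE mulrDl. Qed.

Lemma dotpNl n (x y : 'rV[R]_n) : dotp (- x) y = - dotp x y.
Proof. by rewrite /dotp -sumrN; apply: eq_bigr => i _; rewrite mxE mulNr. Qed.

Lemma dotpNr n (x y : 'rV[R]_n) : dotp x (- y) = - dotp x y.
Proof. by rewrite /dotp -sumrN; apply: eq_bigr => i _; rewrite mxE mulrN. Qed.

Lemma dotpZl n a (x y : 'rV[R]_n) : dotp (a *: x) y = a * dotp x y.
Proof. by rewrite /dotp mulr_sumr; apply: eq_bigr => i _; rewrite mxE mulrA. Qed.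

Lemma dotp0r n (x : 'rV[R]_n) : dotp x 0 = 0.
Proof. by rewrite /dotp big1// => i _; rewrite mxE mulr0. Qed.

Lemma dotp_mul n m (x : 'rV[R]_n) (A : 'M[R]_(n, m)) (y : 'rV[R]_m) :
  dotp (x *m A) y = dotp x (y *m A^T).
Proof.
rewrite /dotp; under eq_bigr do rewrite mxE mulr_suml.
rewrite exchange_big /=; apply: eq_bigr => i _.
rewrite mxE mulr_sumr; apply: eq_bigr => j _.
by rewrite mxE -mulrA [A i j * _]mulrC.
Qed.

Lemma dotp_row n1 n2 (a1 b1 : 'rV[R]_n1) (a2 b2 : 'rV[R]_n2) :
  dotp (row_mx a1 a2) (row_mx b1 b2) = dotp a1 b1 + dotp a2 b2.
Proof. by rewrite /dotp big_split_ord /=; congr (_ + _); apply: eq_bigr => i _;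
  rewrite ?row_mxEl ?row_mxEr. Qed.

End dotp.

Section mgf.
Local Open Scope ereal_scope.
Context (R : realType).

Definition Gm n (mu : set 'rV[R]_n -> \bar R) (y : 'rV[R]_n) :=
  \int[mu]_x (expR (dotp x y))%:E.

Definition symP n (mu : probability 'rV[R]_n R) : probability 'rV[R]_n R :=
  pf (mu \x pf mu (@mneg R n))%E (@madd R n).

Lemma Gm_ge0 n (mu : probability 'rV[R]_n R) y : 0 <= Gm mu y.
Proof. by apply: integral_ge0 => x _; rewrite lee_fin expR_ge0. Qed.

Lemma Gm_pf d (X : measurableType d) m (mu : probability X R) (f : X -> 'rV[R]_m)
   (mf : measurable_fun setT f) y :
  Gm (pf mu mf) y = \int[mu]_x (expR (dotp (f x) y))%:E.
Proof.
rewrite /Gm /pf ge0_integral_pushforward ?preimage_setT//.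
- (apply/measurable_EFinP; exact: (measurableT_comp (@measurable_expR R) (mdotp _))).
Qed.

Lemma Gm_symm n (mu : probability 'rV[R]_n R) y :
  Gm (symm_meas mu) y = Gm mu y * Gm mu (- y).
Proof.
change (Gm (symP mu) y = Gm mu y * Gm mu (- y)).
rewrite (Gm_pf (mu \x pf mu (@mneg R n))%E (@madd R n)) /=.
under eq_integral do rewrite dotpDl expRD.
rewrite (@int_sep _ _ _ _ _ _ _ (fun x => expR (dotp x y)) (fun x => expR (dotp x y))).
- congr (_ * _); transitivity (Gm (pf mu (@mneg R n)) y); first by [].
  rewrite Gm_pf; apply: eq_integral => x _.
  by rewrite dotpNl -dotpNr.
- by move=> x; rewrite expR_ge0.
- by move=> x; rewrite expR_ge0.
- exact: (measurableT_comp (@measurable_expR R) (mdotp _)).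
- exact: (measurableT_comp (@measurable_expR R) (mdotp _)).
Qed.

Lemma Gm0 n (mu : probability 'rV[R]_n R) : Gm mu 0 = 1.
Proof.
rewrite /Gm; under eq_integral do rewrite dotp0r expR0.
by rewrite integral_cst// mul1e; exact: probability_setT.
Qed.

Lemma Gm_symm_ge1 n (mu : probability 'rV[R]_n R) y : 1 <= Gm (symm_meas mu) y.
Proof.
have e : Gm (symm_meas mu) (- y) = Gm (symm_meas mu) y.
  by rewrite !Gm_symm opprK muleC.
have : 2%:E <= Gm (symm_meas mu) y + Gm (symm_meas mu) (- y).
  change (2%:E <= Gm (symP mu) y + Gm (symP mu) (- y)).
  rewrite /Gm -ge0_integralD//; last 2 first.
    (apply/measurable_EFinP; exact: (measurableT_comp (@measurable_expR R) (mdotp _))).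
    (apply/measurable_EFinP; exact: (measurableT_comp (@measurable_expR R) (mdotp _))).
  have H2 : \int[symP mu]_x (cst 2%:E x) = 2%:E.
    rewrite integral_cst//; rewrite [X in _ * X = _](_ : _ = 1) ?mule1//.
    exact: probability_setT.
  rewrite -{1}H2.
  apply: ge0_le_integral => //.
  - by move=> x _; rewrite lee_fin.
  - apply: emeasurable_funD.
    (apply/measurable_EFinP; exact: (measurableT_comp (@measurable_expR R) (mdotp _))).
    (apply/measurable_EFinP; exact: (measurableT_comp (@measurable_expR R) (mdotp _))).
  - move=> x _ /=; rewrite dotpNr -EFinD lee_fin.
    have h1 := expR_ge1Dx (dotp x y); have h2 := expR_ge1Dx (- dotp x y).
    lra.
rewrite e; case: (Gm (symm_meas mu) y) => [r| |]//=.
  by rewrite -EFinD !lee_fin; lra.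
by move=> _; rewrite leey.
Qed.

End mgf.


Section D.
Local Open Scope ereal_scope.
Context (R : realType).

Definition lnE (e : \bar R) : \bar R :=
  match e with r%:E => (ln r)%:E | +oo => +oo | -oo => -oo end.

Lemma LambdaE n (mu : set 'rV[R]_n -> \bar R) y : Lambda mu y = lnE (Gm mu y).
Proof. by []. Qed.

Lemma Lam_ge0 n (mu : probability 'rV[R]_n R) y : 0 <= Lambda (symm_meas mu) y.
Proof.
rewrite LambdaE; have := Gm_symm_ge1 mu y.
case: (Gm (symm_meas mu) y) => [r| |]//=; rewrite !lee_fin => r1.
exact: ln_ge0.
Qed.

Lemma Lam0 n (mu : probability 'rV[R]_n R) : Lambda (symm_meas mu) 0 = 0.
Proof. by rewrite LambdaE Gm_symm oppr0 Gm0 mule1 /= ln1. Qed.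

Lemma lnE_mul (a b : \bar R) : 1 <= a -> 1 <= b -> lnE (a * b) = lnE a + lnE b.
Proof.
case: a => [r| |]//; case: b => [s| |]//; rewrite ?lee_fin => r1 s1.
- by rewrite /= lnM// posrE; lra.
- by rewrite gt0_muley ?lte_fin//; lra.
- by rewrite gt0_mulye ?lte_fin//; lra.
Qed.

Lemma legendre_ge0 n (L : 'rV[R]_n -> \bar R) (u : 'rV[R]_n) : L 0%R = 0 -> 0 <= legendre L u.
Proof.
move=> L0; apply: ereal_sup_ubound; exists 0%R => //.
by rewrite L0 dotp0r sube0.
Qed.

Lemma legendre_scale n (L : 'rV[R]_n -> \bar R) (t : R) (u : 'rV[R]_n) :
  (forall y, 0 <= L y) -> L 0%R = 0 -> (0 <= t <= 1)%R ->
  legendre L (t *: u) <= legendre L u.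
Proof.
move=> L0 L00 /andP[t0 t1]; apply: ge_ereal_sup => _ [y _ <-].
have := L0 y; case E: (L y) => [r| |]//=; last by rewrite leNye.
rewrite lee_fin => r0; rewrite dotpZl.
have [h|h] := leP r (dotp u y).
  apply: le_trans (ereal_sup_ubound _); last by exists y.
  by rewrite E -EFinB lee_fin; nra.
apply: le_trans (legendre_ge0 u L00).
by rewrite -EFinB lee_fin; nra.
Qed.

End D.


Section E.
Local Open Scope ereal_scope.
Context (R : realType).

Section affine.
Context n m (mu : probability 'rV[R]_n R) (A : 'M[R]_(n, m)) (b : 'rV[R]_m).
Let mL := maffine A b.

Lemma GmL y : Gm (pf mu mL) y = (expR (dotp b y))%:E * Gm mu (y *m A^T).
Proof.
rewrite Gm_pf.
under eq_integral do rewrite dotpDl dotp_mul expRD mulrC EFinM.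
rewrite ge0_integralZl_EFin//.
by apply/measurable_EFinP; exact: (measurableT_comp (@measurable_expR R) (mdotp _)).
Qed.

Lemma ML y : Gm (symm_meas (pf mu mL)) y = Gm (symm_meas mu) (y *m A^T).
Proof.
have -> : Gm (symm_meas (pf mu mL)) y = Gm (pf mu mL) y * Gm (pf mu mL) (- y).
  exact: (Gm_symm (pf mu mL) y).
rewrite !GmL Gm_symm mulNmx muleACA -EFinM -expRD dotpNr subrr expR0 mul1e.
by [].
Qed.

Lemma LamL y : Lambda (symm_meas (pf mu mL)) y = Lambda (symm_meas mu) (y *m A^T).
Proof. by rewrite !LambdaE ML. Qed.

Lemma WL (beta : R) u :
  legendre (Lambda (symm_meas (pf mu mL))) (beta^-1 *: (u *m A)) <=
  legendre (Lambda (symm_meas mu)) (beta^-1 *: u).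
Proof.
apply: ge_ereal_sup => _ [y _ <-].
rewrite LamL scalemxAl dotp_mul.
by apply: ereal_sup_ubound; exists (y *m A^T).
Qed.

Lemma IC_affine (beta : R) : (0 < beta)%R -> IC beta mu -> IC beta (pf mu mL).
Proof.
move=> b0 Hmu f mf [M fM].
pose L := fun x : 'rV[R]_n => (x *m A + b)%R.
have mg : measurable_fun setT (f \o L) := measurableT_comp mf mL.
have := Hmu (f \o L) mg (ex_intro _ M (fun x => fM (L x))).
apply: le_trans; apply: lee_pmul.
- by apply: integral_ge0 => x _; exact: expeR_ge0.
- by apply: integral_ge0 => x _; rewrite lee_fin expR_ge0.
- apply: le_trans (le_int_pf mu mL (fun y => expeR_ge0 _)) _.
  apply: le_int_nn => x; first exact: expeR_ge0.
  rewrite lee_expeR /inf_conv; apply: le_ereal_inf_tmp => _ [y _ <-].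
  apply: le_trans (ereal_inf_lbound _) _; first by exists (L y).
  apply: leeD2r.
  have -> : (L x - L y = (x - y) *m A)%R.
    by rewrite /L mulmxBl opprD addrACA subrr addr0.
  exact: WL.
- rewrite /pf ge0_integral_pushforward ?preimage_setT//.
  by apply/measurable_EFinP; apply: measurableT_comp => //; exact: measurableT_comp.
Qed.

End affine.

End E.


Section F.
Local Open Scope ereal_scope.
Context (R : realType).

Lemma le_expeR_inf (A : \bar R) (S : set (\bar R)) :
  (forall s, S s -> A <= expeR s) -> A <= expeR (ereal_inf S).
Proof.
move=> HS; rewrite leNgt; apply/negP => hlt.
case: A hlt HS => [a| |]// hlt HS.
- have a0 : (0 < a)%R.
    by rewrite -lte_fin; apply: le_lt_trans hlt; exact: expeR_ge0.
  have : ereal_inf S < (ln a)%:E.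
    by rewrite -lte_expeR /= lnK ?posrE.
  move=> /ereal_inf_lt[s Ss sa].
  have := HS s Ss; rewrite leNgt => /negP; apply.
  by rewrite (lt_le_trans (_ : _ < expeR (ln a)%:E))// ?lte_expeR//= lnK ?posrE.
- have : exists r : R, ereal_inf S < r%:E.
    move: hlt; case: (ereal_inf S) => [s| |]// _.
      by exists (s + 1)%R; rewrite lte_fin ltrDl.
    by move=> *; exists 0%R; rewrite ?ltNyr.
  move=> [r /ereal_inf_lt[s Ss sr]].
  have := HS s Ss; rewrite leNgt => /negP; apply.
  apply: le_lt_trans (ltry (expR r)).
  by rewrite -[(expR r)%:E]/(expeR r%:E) lee_expeR ltW.
- by rewrite ltNge leNye in hlt.
Qed.

Section prod.
Context n1 n2 (mu1 : probability 'rV[R]_n1 R) (mu2 : probability 'rV[R]_n2 R).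
Let mR := @mrowmx R n1 n2.

Lemma GmP y1 y2 :
  Gm (pf (mu1 \x mu2)%E mR) (row_mx y1 y2) = Gm mu1 y1 * Gm mu2 y2.
Proof.
rewrite Gm_pf.
under eq_integral do rewrite dotp_row expRD.
rewrite (@int_sep _ _ _ _ _ _ _ (fun x => expR (dotp x y1)) (fun x => expR (dotp x y2))).
- by [].
- by move=> x; rewrite expR_ge0.
- by move=> x; rewrite expR_ge0.
- exact: (measurableT_comp (@measurable_expR R) (mdotp _)).
- exact: (measurableT_comp (@measurable_expR R) (mdotp _)).
Qed.

Lemma MP y1 y2 : Gm (symm_meas (pf (mu1 \x mu2)%E mR)) (row_mx y1 y2) =
  Gm (symm_meas mu1) y1 * Gm (symm_meas mu2) y2.
Proof.
have -> : Gm (symm_meas (pf (mu1 \x mu2)%E mR)) (row_mx y1 y2) =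
  Gm (pf (mu1 \x mu2)%E mR) (row_mx y1 y2) * Gm (pf (mu1 \x mu2)%E mR) (- row_mx y1 y2).
  exact: (Gm_symm (pf (mu1 \x mu2)%E mR) (row_mx y1 y2)).
by rewrite opp_row_mx !GmP !Gm_symm muleACA.
Qed.

Lemma LamP y1 y2 : Lambda (symm_meas (pf (mu1 \x mu2)%E mR)) (row_mx y1 y2) =
  Lambda (symm_meas mu1) y1 + Lambda (symm_meas mu2) y2.
Proof. by rewrite !LambdaE MP lnE_mul// Gm_symm_ge1. Qed.

Lemma WP (beta beta1 beta2 : R) u1 u2 :
  (0 < beta1)%R -> (beta1 <= beta)%R -> (0 < beta2)%R -> (beta2 <= beta)%R ->
  legendre (Lambda (symm_meas (pf (mu1 \x mu2)%E mR))) (beta^-1 *: row_mx u1 u2) <=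
  legendre (Lambda (symm_meas mu1)) (beta1^-1 *: u1) +
  legendre (Lambda (symm_meas mu2)) (beta2^-1 *: u2).
Proof.
move=> b10 b1 b20 b2.
have b0 : (0 < beta)%R by apply: lt_le_trans b1.
have le1 : legendre (Lambda (symm_meas mu1)) (beta^-1 *: u1) <=
           legendre (Lambda (symm_meas mu1)) (beta1^-1 *: u1).
  have -> : (beta^-1 *: u1 = (beta1 / beta) *: (beta1^-1 *: u1))%R.
    by rewrite scalerA mulrAC mulfV ?gt_eqF// mul1r.
  apply: legendre_scale; [exact: Lam_ge0|exact: Lam0|].
  by rewrite divr_ge0 ?(ltW b0) ?(ltW b10)//= ler_pdivrMr// mul1r.
have le2 : legendre (Lambda (symm_meas mu2)) (beta^-1 *: u2) <=
           legendre (Lambda (symm_meas mu2)) (beta2^-1 *: u2).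
  have -> : (beta^-1 *: u2 = (beta2 / beta) *: (beta2^-1 *: u2))%R.
    by rewrite scalerA mulrAC mulfV ?gt_eqF// mul1r.
  apply: legendre_scale; [exact: Lam_ge0|exact: Lam0|].
  by rewrite divr_ge0 ?(ltW b0) ?(ltW b20)//= ler_pdivrMr// mul1r.
apply: le_trans (leeD le1 le2).
apply: ge_ereal_sup => _ [y _ <-].
rewrite -(hsubmxK y) LamP scale_row_mx dotp_row.
have := Lam_ge0 mu1 (lsubmx y); have := Lam_ge0 mu2 (rsubmx y).
case E1: (Lambda (symm_meas mu1) (lsubmx y)) => [r1| |]//;
  case E2: (Lambda (symm_meas mu2) (rsubmx y)) => [r2| |]// _ _; last first.
- by rewrite /= leNye.
- by rewrite /= leNye.
- by rewrite /= leNye.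
rewrite -EFinD (_ : (_ - _ = (dotp (beta^-1 *: u1) (lsubmx y) - r1) +
    (dotp (beta^-1 *: u2) (rsubmx y) - r2))%R); last by ring.
rewrite EFinD; apply: leeD; apply: ereal_sup_ubound.
  by exists (lsubmx y) => //; rewrite E1.
by exists (rsubmx y) => //; rewrite E2.
Qed.

Lemma int_cstP d (X : measurableType d) (P : probability X R) (c : \bar R) :
  \int[P]_x (cst c x) = c.
Proof.
rewrite integral_cst//; rewrite [X in _ * X = _](_ : _ = 1) ?mule1//.
exact: probability_setT.
Qed.

Lemma IC_prod (beta1 beta2 : R) : (0 < beta1)%R -> (0 < beta2)%R ->
  IC beta1 mu1 -> IC beta2 mu2 ->
  IC (Num.max beta1 beta2) (pf (mu1 \x mu2)%E mR).
Proof.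
move=> b10 b20 H1 H2 f mf [M fM].
set beta := Num.max beta1 beta2.
have b1 : (beta1 <= beta)%R by rewrite le_max lexx.
have b2 : (beta2 <= beta)%R by rewrite le_max lexx orbT.
have W1ge0 x : 0 <= legendre (Lambda (symm_meas mu1)) (beta1^-1 *: x).
  by apply: legendre_ge0; exact: Lam0.
pose F := fun (z1 : 'rV[R]_n1) (y2 : 'rV[R]_n2) => f (row_mx z1 y2).
have mF z1 : measurable_fun setT (F z1) := measurableT_comp mf (mrowmx1 z1).
pose I := fun z1 => \int[mu2]_y2 (expR (- F z1 y2))%:E.
have Ibnd z1 : (expR (- M))%:E <= I z1 /\ I z1 <= (expR M)%:E.
  split.
  - rewrite -[X in X <= _](int_cstP mu2); apply: le_int_nn => y2.
      by rewrite /= lee_fin expR_ge0.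
    rewrite /= lee_fin ler_expR lerN2.
    exact: le_trans (ler_norm _) (fM _).
  - rewrite -[X in _ <= X](int_cstP mu2); apply: le_int_nn => y2.
      by rewrite /= lee_fin expR_ge0.
    rewrite /= lee_fin ler_expR.
    by apply: le_trans (fM (row_mx z1 y2)); rewrite -normrN ler_norm.
pose i := fun z1 => fine (I z1).
have Ii z1 : (i z1)%:E = I z1.
  by have [] := Ibnd z1; rewrite /i; case: (I z1).
have ibnd z1 : (expR (- M) <= i z1 <= expR M)%R.
  by have [] := Ibnd z1; rewrite -Ii !lee_fin => -> ->.
have ipos z1 : (0 < i z1)%R.
  by have /andP[+ _] := ibnd z1; apply: lt_le_trans; exact: expR_gt0.
pose phi := fun z1 => (- ln (i z1))%R.
have mI : measurable_fun setT I.
  apply: (measurable_fun_fubini_tonelli_F (fun p => (expR (- f (row_mx p.1 p.2)))%:E)).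
    apply/measurable_EFinP; apply: measurableT_comp => //.
    apply: measurableT_comp => //; exact: measurableT_comp mf mR.
  by move=> p; rewrite lee_fin expR_ge0.
have mphi : measurable_fun setT phi.
  apply: measurableT_comp => //; apply: measurableT_comp => //.
  exact: measurableT_comp mI.
have phibnd z1 : (`|phi z1| <= M)%R.
  have /andP[l u] := ibnd z1.
  have l' : (- M <= ln (i z1))%R by rewrite -(expRK (- M)%R) ler_ln ?posrE ?expR_gt0.
  have u' : (ln (i z1) <= M)%R by rewrite -(expRK M) ler_ln ?posrE ?expR_gt0.
  by rewrite /phi normrN ler_norml l' u'.
have ephi z1 : expR (- phi z1) = i z1 by rewrite /phi opprK lnK ?posrE.
have Hphi := H1 phi mphi (ex_intro _ M phibnd).
have Ieq : \int[pf (mu1 \x mu2)%E mR]_x (expR (- f x))%:E =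
           \int[mu1]_x (expR (- phi x))%:E.
  rewrite /pf ge0_integral_pushforward ?preimage_setT//; last first.
    apply/measurable_EFinP; apply: measurableT_comp => //.
    exact: measurableT_comp mf.
  rewrite (fubini_tonelli1 (fun p => (expR (- f (row_mx p.1 p.2)))%:E)); last 2 first.
    apply/measurable_EFinP; apply: measurableT_comp => //.
    apply: measurableT_comp => //; exact: measurableT_comp mf mR.
    by move=> p; rewrite lee_fin expR_ge0.
  by apply: eq_integral => x _; rewrite ephi Ii.
have key x1 : \int[mu2]_x2 expeR (inf_conv
    (fun x => legendre (Lambda (symm_meas (pf (mu1 \x mu2)%E mR))) (beta^-1 *: x))
    f (row_mx x1 x2)) <=
  expeR (inf_conv (fun x => legendre (Lambda (symm_meas mu1)) (beta1^-1 *: x)) phi x1).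
  apply: le_expeR_inf => _ [z1 _ <-] /=.
  have := W1ge0 (x1 - z1)%R.
  case EW: (legendre (Lambda (symm_meas mu1)) (beta1^-1 *: (x1 - z1)%R)) => [w| |]//= _;
    last by rewrite leey.
  pose Fw := fun y2 => (F z1 y2 + w)%R.
  have mFw : measurable_fun setT Fw.
    by apply: measurable_funD => //; exact: mF.
  have Fwb y2 : (`|Fw y2| <= M + `|w|)%R.
    by apply: le_trans (ler_normD _ _) _; rewrite lerD2r; exact: fM.
  have H := H2 Fw mFw (ex_intro _ _ Fwb).
  have IFw : \int[mu2]_y2 (expR (- Fw y2))%:E = (expR (- w))%:E * I z1.
    transitivity (\int[mu2]_y2 ((expR (- w))%:E * (expR (- F z1 y2))%:E)).
      by apply: eq_integral => y _; rewrite /Fw opprD expRD mulrC EFinM.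
    rewrite ge0_integralZl_EFin//.
    apply/measurable_EFinP; apply: measurableT_comp => //.
    exact: measurableT_comp (mF z1).
  rewrite IFw -Ii -EFinM in H.
  have pt x2 : expeR (inf_conv
      (fun x => legendre (Lambda (symm_meas (pf (mu1 \x mu2)%E mR))) (beta^-1 *: x))
      f (row_mx x1 x2)) <=
    expeR (inf_conv (fun x => legendre (Lambda (symm_meas mu2)) (beta2^-1 *: x)) Fw x2).
    rewrite lee_expeR; apply: le_ereal_inf_tmp => _ [y2 _ <-].
    apply: le_trans (ereal_inf_lbound _) _; first by exists (row_mx z1 y2).
    rewrite /= opp_row_mx add_row_mx.
    apply: le_trans (leeD2r _ (WP _ _ b10 b1 b20 b2)) _.
    rewrite EW /Fw /F EFinD.
    case: (legendre _ _) => [a| |]//=.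
    by rewrite -!EFinD lee_fin; lra.
  have Ale := le_int_nn mu2 (fun x2 => expeR_ge0 _) pt.
  have c0 : (0 < expR (- w) * i z1)%R by rewrite mulr_gt0 ?expR_gt0.
  have -> : expR (w + phi z1)%R = (1 * (expR (- w) * i z1)^-1)%R.
    by rewrite mul1r invfM -ephi -!expRN !opprK expRD.
  rewrite EFinM lee_pdivlMr//.
  apply: le_trans H; apply: lee_wpmul2r => //.
  by rewrite lee_fin ltW.
rewrite Ieq; apply: le_trans Hphi; apply: lee_pmul.
- by apply: integral_ge0 => x _; exact: expeR_ge0.
- by apply: integral_ge0 => x _; rewrite lee_fin expR_ge0.
- apply: le_trans (le_int_pf (mu1 \x mu2)%E mR (fun _ => expeR_ge0 _)) _.
  apply: le_int_fub => [z|x1]; first exact: expeR_ge0.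
  exact: key x1.
- by [].
Qed.

End prod.
End F.




Lemma IC_conv (R : realType) n (mu1 mu2 : probability 'rV[R]_n R) (beta1 beta2 : R) :
  0 < beta1 -> 0 < beta2 -> IC beta1 mu1 -> IC beta2 mu2 ->
  IC (Num.max beta1 beta2) (conv_meas mu1 mu2).
Proof.
move=> b10 b20 H1 H2.
have Hp := IC_prod b10 b20 H1 H2.
pose A : 'M[R]_(n + n, n) := col_mx 1%:M 1%:M.
have bgt0 : 0 < Num.max beta1 beta2 by rewrite lt_max b10.
have := IC_affine A 0 bgt0 Hp.
have -> : conv_meas mu1 mu2 = pushforward (pushforward (mu1 \x mu2)%E
    (fun p => row_mx p.1 p.2)) (fun x => x *m A + 0).
  apply: funext => S; rewrite /conv_meas /pushforward; congr ((mu1 \x mu2)%E _).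
  by apply: funext => p; rewrite /preimage /A /= mul_row_col !mulmx1 addr0.
exact.
Qed.

Theorem proposition8 (R : realType) :
  (* 1. affine images *)
  (forall (n : nat) (beta : R) (mu : probability 'rV[R]_n R),
      0 < beta -> IC beta mu ->
      forall (m : nat) (L : 'rV[R]_n -> 'rV[R]_m),
        affine_map L -> IC beta (pushforward mu L)) /\
  (* 2. products *)
  (forall (n1 n2 : nat) (beta1 beta2 : R)
          (mu1 : probability 'rV[R]_n1 R) (mu2 : probability 'rV[R]_n2 R),
      0 < beta1 -> 0 < beta2 -> IC beta1 mu1 -> IC beta2 mu2 ->
      IC (Num.max beta1 beta2) (prod_meas mu1 mu2)) /\
  (* 3. convolutions (n1 = n2 = n) *)
  (forall (n : nat) (beta1 beta2 : R)
          (mu1 mu2 : probability 'rV[R]_n R),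
      0 < beta1 -> 0 < beta2 -> IC beta1 mu1 -> IC beta2 mu2 ->
      IC (Num.max beta1 beta2) (conv_meas mu1 mu2)) /\
  (* 4. symmetrization *)
  (forall (n : nat) (beta : R) (mu : probability 'rV[R]_n R),
      0 < beta -> IC beta mu -> IC beta (symm_meas mu)).
Proof.
split; [|split; [|split]].
- move=> n beta mu b0 Hmu m L [A [b HL]].
  have -> : L = (fun x => x *m A + b) by apply: funext => x; rewrite HL.
  exact: (IC_affine A b b0 Hmu).
- move=> n1 n2 beta1 beta2 mu1 mu2 b10 b20 H1 H2.
  exact: (IC_prod b10 b20 H1 H2).
- move=> n beta1 beta2 mu1 mu2; exact: IC_conv.
- move=> n beta mu b0 Hmu.
  have Hr : IC beta (pf mu (@mneg R n)).
    have := IC_affine (- 1%:M) 0 b0 Hmu.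
    have -> : pf mu (@mneg R n) =
              pushforward mu (fun x : 'rV[R]_n => x *m (- 1%:M) + 0).
      apply: funext => S; rewrite /pushforward; congr (mu _).
      by apply: funext => p; rewrite /preimage /= mulmxN mulmx1 addr0.
    exact.
  have := IC_conv b0 b0 Hmu Hr.
  by rewrite maxxx.
Qed.
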